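(* For every $l\in\mathbb N$ there exists an update sequence of width $l$ on the real line such that any probabilistic monotone embedding of this sequence into HSTs has distortion $\Omega(l)$, even if the entire sequence is known in advance.
   Context: For $\mu \ge 1$, a $\mu$-HST is a metric space whose points are the leaves of a rooted tree $T$; every node $v$ has weight $\varphi(v)\ge 0$, $\varphi(v)=0$ iff $v$ is a leaf, $\varphi(v)\le\varphi(u)/\mu$ when $v$ is a child of $u$; the distance of leaves $u,v$ is $\varphi(\mathrm{lca}(u,v))$. An update sequence on $(X,d_X)$ is a sequence of pairs $(v_t,o_t)\in X\times\{+,-\}$ ($v_t$ arrives if $o_t=+$, leaves if $o_t=-$) with alive sets $L_0=\varnothing$, $L_t=L_{t-1}\cup\{v_t\}$ or $L_{t-1}\setminus\{v_t\}$ accordingly; its width is $\max_t|L_t|$. A (deterministic) monotone embedding of the sequence into HSTs is a sequence of metrics $d_t$ on $L_t$, each an HST, with $d_t(u,v)\ge d_X(u,v)$ for $u,v\in L_t$ and $d_t(u,v)\le d_{t-1}(u,v)$ for $u,v\in L_{t-1}\cap L_t$; a probabilistic one is a probability distribution over these. Its distortion is the least $\lambda$ with $\mathbb E[d_t(u,v)]\le\lambda d_X(u,v)$ for all $t$ and $u,v\in L_t$. *)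

(* Defs.v *)
From Stdlib Require Import Rdefinitions.
From HB Require Import structures.
From mathcomp Require Import all_boot all_order all_algebra.
From mathcomp Require Import finmap.
From mathcomp Require Import all_classical all_reals all_analysis.
From mathcomp Require Import Rstruct.

Set Implicit Arguments.
Unset Strict Implicit.
Unset Printing Implicit Defensive.

Import Order.TTheory GRing.Theory Num.Theory.
Local Open Scope ring_scope.

(* An update is a pair (v, o); o = true means '+' (arrival), false means '-'. *)
Definition update := (R * bool)%type.

Definition alive (s : seq update) (t : nat) : {fset R} :=
  foldl (fun (L : {fset R}) (p : update) =>
           if p.2 then fsetU [fset p.1]%fset L else fsetD L [fset p.1]%fset)
        fset0 (take t s).

Definition width (s : seq update) : nat :=
  \max_(t < (size s).+1) size (enum_fset (alive s t)).

Inductive hst_tree : Type :=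
| HLeaf of R
| HNode of R & seq hst_tree.

Definition weight (T : hst_tree) : R :=
  match T with HLeaf _ => 0 | HNode w _ => w end.

Fixpoint leaves (T : hst_tree) : seq R :=
  match T with
  | HLeaf x => [:: x]
  | HNode _ cs =>
      (fix go (cs : seq hst_tree) : seq R :=
         match cs with [::] => [::] | c :: cs' => leaves c ++ go cs' end) cs
  end.

Fixpoint valid_hst (mu : R) (T : hst_tree) : Prop :=
  match T with
  | HLeaf _ => True
  | HNode w cs =>
      0 < w /\ cs <> [::] /\
      (fix go (cs : seq hst_tree) : Prop :=
         match cs with
         | [::] => True
         | c :: cs' => (weight c <= w / mu /\ valid_hst mu c) /\ go cs'
         end) cs
  end.

Fixpoint hst_dist (T : hst_tree) (u v : R) : R :=
  match T with
  | HLeaf _ => 0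
  | HNode w cs =>
      (fix go (cs : seq hst_tree) : R :=
         match cs with
         | [::] => w
         | c :: cs' =>
             if (u \in leaves c) && (v \in leaves c) then hst_dist c u v
             else go cs'
         end) cs
  end.

Definition is_mu_hst (mu : R) (L : {fset R}) (d : R -> R -> R) : Prop :=
  L = fset0 \/
  exists T : hst_tree,
    [/\ valid_hst mu T, uniq (leaves T),
        (forall x, (x \in leaves T) = (x \in L)) &
        forall u v, u \in L -> v \in L -> d u v = hst_dist T u v].

Definition is_hst (L : {fset R}) (d : R -> R -> R) : Prop :=
  exists mu : R, 1 <= mu /\ is_mu_hst mu L d.

Definition monotone_hst_embedding (s : seq update) (d : nat -> R -> R -> R) : Prop :=
  (forall t, (t <= size s)%N -> is_hst (alive s t) (d t)) /\
  (forall t u v, (t <= size s)%N -> u \in alive s t -> v \in alive s t ->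
     `|u - v| <= d t u v) /\
  (forall t u v, (1 <= t <= size s)%N ->
     u \in alive s t.-1 -> v \in alive s t.-1 ->
     u \in alive s t -> v \in alive s t ->
     d t u v <= d t.-1 u v).

Definition prob_monotone_hst_embedding (s : seq update)
  (dsp : measure_display) (Omega : measurableType dsp)
  (P : probability Omega R) (d : Omega -> nat -> R -> R -> R) : Prop :=
  (forall w, monotone_hst_embedding s (d w)) /\
  (forall t u v, @measurable_fun _ _ Omega (measurableTypeR R) setT (fun w => d w t u v)).

Definition distortion_at_most (s : seq update)
  (dsp : measure_display) (Omega : measurableType dsp)
  (P : probability Omega R) (d : Omega -> nat -> R -> R -> R) (lambda : R) : Prop :=
  1 <= lambda /\
  forall t u v, (t <= size s)%N -> u \in alive s t -> v \in alive s t ->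
    (\int[P]_w (d w t u v)%:E <= (lambda * `|u - v|)%:E)%E.

(* Main.v *)
Require Import Defs.
From Stdlib Require Import Rdefinitions.
From HB Require Import structures.
From mathcomp Require Import all_boot all_order all_algebra.
From mathcomp Require Import finmap.
From mathcomp Require Import all_classical all_reals all_analysis.
From mathcomp Require Import Rstruct.
From mathcomp Require Import zify ring lra.
Import Order.TTheory GRing.Theory Num.Theory.
Local Open Scope ring_scope.
Set Implicit Arguments.
Unset Strict Implicit.

Fixpoint tree_ind' (P : hst_tree -> Prop) (HL : forall x, P (HLeaf x))
  (HN : forall w cs, (forall c, List.In c cs -> P c) -> P (HNode w cs)) t : P t :=
  match t with
  | HLeaf x => HL x
  | HNode w cs => HN w cs
      ((fix go (cs : seq hst_tree) : forall c, List.In c cs -> P c :=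
          match cs with
          | [::] => fun c (H : List.In c [::]) => False_ind _ H
          | c' :: cs' => fun c H =>
              match H with
              | or_introl E => eq_ind c' P (tree_ind' HL HN c') c E
              | or_intror H' => go cs' c H'
              end
          end) cs)
  end.

Lemma leaves_cons w c cs : leaves (HNode w (c :: cs)) = leaves c ++ leaves (HNode w cs).
Proof. by []. Qed.
Lemma leaves_nil w : leaves (HNode w [::]) = [::].
Proof. by []. Qed.
Lemma dist_cons w c cs u v : hst_dist (HNode w (c :: cs)) u v =
  if (u \in leaves c) && (v \in leaves c) then hst_dist c u v else hst_dist (HNode w cs) u v.
Proof. by []. Qed.
Lemma dist_nil w u v : hst_dist (HNode w [::]) u v = w.
Proof. by []. Qed.

Lemma valid_node mu w cs : valid_hst mu (HNode w cs) ->
  0 < w /\ forall c, List.In c cs -> weight c <= w / mu /\ valid_hst mu c.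
Proof.
move=> [w0 [_ H]]; split => // c.
elim: cs H => [//|c' cs IH] /= [[H1 H2] H3] [<-|Hi]; first by [].
exact: IH.
Qed.

Lemma dist_le_weight mu (mu1 : 1 <= mu) T u v : valid_hst mu T -> hst_dist T u v <= weight T.
Proof.
elim/tree_ind': T => [x _|w cs IH Hv]; first by rewrite /= lexx.
have [w0 Hc] := valid_node Hv.
change (hst_dist (HNode w cs) u v <= w).
have wmu : w / mu <= w.
  by rewrite ler_pdivrMr ?(lt_le_trans ltr01) // ler_peMr // ltW.
elim: cs IH Hc {Hv} => [|c cs IHcs] IH Hc; first by rewrite dist_nil.
rewrite dist_cons; case: ifP => _.
  have [Hw Hvc] := Hc c (or_introl erefl).
  by apply: le_trans (IH c (or_introl erefl) Hvc) (le_trans Hw wmu).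
apply: IHcs => [c' H|c' H]; [exact: IH c' (or_intror H)| exact: Hc c' (or_intror H)].
Qed.

Lemma in_leaves_sub w cs c x : List.In c cs -> x \in leaves c -> x \in leaves (HNode w cs).
Proof.
elim: cs => [//|c' cs IH] [<-|H] Hx; rewrite leaves_cons mem_cat ?Hx //.
by rewrite IH ?orbT.
Qed.

Lemma in_leaves_ex w cs x : x \in leaves (HNode w cs) -> exists c, List.In c cs /\ x \in leaves c.
Proof.
elim: cs => [//|c' cs IH]; rewrite leaves_cons mem_cat => /orP [H|/IH [c [H1 H2]]].
  by exists c'; split => //; left.
by exists c; split => //; right.
Qed.

Lemma go_none w cs u v : (forall c, List.In c cs -> ~~ ((u \in leaves c) && (v \in leaves c))) ->
  hst_dist (HNode w cs) u v = w.
Proof.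
elim: cs => [|c cs IH] H; first by rewrite dist_nil.
rewrite dist_cons (negbTE (H c (or_introl erefl))) IH // => c' Hc'.
exact: H c' (or_intror Hc').
Qed.

Lemma go_some w cs c u v : uniq (leaves (HNode w cs)) -> List.In c cs -> u \in leaves c ->
  hst_dist (HNode w cs) u v = if v \in leaves c then hst_dist c u v else w.
Proof.
elim: cs => [//|c' cs IH]; rewrite leaves_cons cat_uniq => /and3P [U1 Dj U2] [E|Hi] Hu.
  subst c'; rewrite dist_cons Hu /=; case: ifP => // _.
  apply: go_none => c'' Hc''; apply/negP => /andP [Hu' _].
  by move/hasPn: Dj => /(_ u (in_leaves_sub w Hc'' Hu')); rewrite Hu.
have Hu' : u \notin leaves c'.
  apply/negP => Hu'; move/hasPn: Dj => /(_ u (in_leaves_sub w Hi Hu)).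
  by rewrite Hu'.
by rewrite dist_cons (negbTE Hu') andFb IH.
Qed.

Lemma uniq_child w cs c : uniq (leaves (HNode w cs)) -> List.In c cs -> uniq (leaves c).
Proof.
elim: cs => [//|c' cs IH]; rewrite leaves_cons cat_uniq => /and3P [U1 _ U2] [<-|H] //.
exact: IH.
Qed.

Lemma hst_ultra mu (mu1 : 1 <= mu) T : valid_hst mu T -> uniq (leaves T) ->
  forall u v x, u \in leaves T -> v \in leaves T -> x \in leaves T ->
  hst_dist T u x <= Num.max (hst_dist T u v) (hst_dist T v x).
Proof.
elim/tree_ind': T => [y _ _ u v x|w cs IH Hv U u v x Hu Hvv Hx].
  by rewrite /= maxxx.
have [w0 Hc] := valid_node Hv.
have wmu : w / mu <= w.
  by rewrite ler_pdivrMr ?(lt_le_trans ltr01) // ler_peMr // ltW.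
have [c [Hic Huc]] := in_leaves_ex Hu.
have [Hwc Hvc] := Hc c Hic.
rewrite (go_some v U Hic Huc) (go_some x U Hic Huc).
case Hxc: (x \in leaves c); case Hvc': (v \in leaves c).
- rewrite (go_some x U Hic Hvc') Hxc.
  exact: IH c Hic Hvc (uniq_child U Hic) u v x Huc Hvc' Hxc.
- rewrite le_max; apply/orP; left.
  exact: le_trans (dist_le_weight mu1 u x Hvc) (le_trans Hwc wmu).
- by rewrite (go_some x U Hic Hvc') Hxc le_max lexx orbT.
- by rewrite le_max lexx.
Qed.

Lemma hst_metric_ultra (L : {fset R}) (d : R -> R -> R) u v x :
  is_hst L d -> u \in L -> v \in L -> x \in L ->
  d u x <= Num.max (d u v) (d v x).
Proof.
move=> [mu [mu1 [->|[T [Hv U HL Hd]]]]]; first by rewrite inE.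
move=> Hu Hvv Hx; rewrite !Hd //.
by apply: (hst_ultra mu1 Hv U); rewrite HL.
Qed.

Definition stepf (L : {fset R}) (p : update) : {fset R} :=
  if p.2 then fsetU [fset p.1]%fset L else fsetD L [fset p.1]%fset.
Definition ins (m : R) (L : {fset R}) : {fset R} := fsetU [fset m]%fset L.
Definition run (L : {fset R}) (s : seq update) := foldl stepf L s.
Lemma aliveE s t : alive s t = run fset0 (take t s).
Proof. by []. Qed.

Fixpoint seg (a : R) (k : nat) : seq update :=
  if k is k'.+1 then
    (a + (2^k')%:R, true) :: seg a k' ++ seg (a + (2^k')%:R) k' ++ [:: (a + (2^k')%:R, false)]
  else [::].
Fixpoint sz (k : nat) : nat := if k is k'.+1 then (sz k' + sz k').+2 else 0.
Lemma size_seg a k : size (seg a k) = sz k.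
Proof.
by elim: k a => [//|k IH] a /=; rewrite !size_cat /= !IH addn1 addnS.
Qed.

Definition Pre (L : {fset R}) (a : R) (k : nat) :=
  forall x, x \in L -> ~~ ((a < x) && (x < a + (2^k)%:R)).

Lemma pow2S k : ((2^k.+1)%:R : R) = (2^k)%:R + (2^k)%:R.
Proof. by rewrite expnS mul2n -addnn natrD. Qed.
Lemma pow2_gt0 k : (0 : R) < (2^k)%:R.
Proof. by rewrite ltr0n expn_gt0. Qed.

Lemma preL L a k : Pre L a k.+1 -> Pre (ins (a + (2^k)%:R) L) a k.
Proof.
move=> H x; rewrite !inE => /orP [/eqP ->|Hx]; first by rewrite ltxx andbF.
apply: contra (H x Hx) => /andP [-> /=] Hx2.
by rewrite pow2S addrA (lt_le_trans Hx2) // lerDl ltW // pow2_gt0.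
Qed.

Lemma preR L a k : Pre L a k.+1 -> Pre (ins (a + (2^k)%:R) L) (a + (2^k)%:R) k.
Proof.
move=> H x; rewrite !inE => /orP [/eqP ->|Hx]; first by rewrite ltxx.
apply: contra (H x Hx) => /andP [Hx1 Hx2].
by rewrite pow2S addrA Hx2 andbT (le_lt_trans _ Hx1) // lerDl ltW // pow2_gt0.
Qed.

Lemma mid_notin L a k : Pre L a k.+1 -> a + (2^k)%:R \notin L.
Proof.
move=> H; apply/negP => /H; rewrite ltrDl pow2_gt0 /= pow2S addrA ltrDl pow2_gt0.
by [].
Qed.

Lemma run_cat L s1 s2 : run L (s1 ++ s2) = run (run L s1) s2.
Proof. exact: foldl_cat. Qed.

Lemma seg_final k : forall a L, Pre L a k -> run L (seg a k) = L.
Proof.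
elim: k => [//|k IH] a L H /=.
rewrite /run /= -/(run _ _) !run_cat.
rewrite (IH a (ins _ L)); last exact: preL H.
rewrite (IH _ (ins _ L)); last exact: preR H.
rewrite /= /stepf /ins /=.
apply/fsetP => x; rewrite !inE; case: eqVneq => [->|] //=.
by rewrite (negbTE (mid_notin H)).
Qed.

Lemma mid_bounds (a : R) k : (a < a + (2^k)%:R) && (a + (2^k)%:R < a + (2^k.+1)%:R).
Proof. by rewrite ltrDl pow2_gt0 /= pow2S addrA ltrDl pow2_gt0. Qed.

Lemma seg_states k : forall a L i, Pre L a k -> (i <= sz k)%N ->
  exists S : {fset R}, [/\ run L (take i (seg a k)) = fsetU L S,
    (forall x, x \in S -> (a < x) && (x < a + (2^k)%:R)),
    (#|` S| <= k)%N & (0 < i < sz k)%N -> a + (2^k.-1)%:R \in S].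
Proof.
elim: k => [|k IH] a L i H Hi.
  exists fset0; move: Hi; rewrite /= leqn0 => /eqP ->.
  split; [by rewrite fsetU0 | by move=> x; rewrite inE | by rewrite ?cardfs0 | by []].
case: i Hi => [|i] Hi.
  exists fset0.
  split; [by rewrite fsetU0 | by move=> x; rewrite inE | by rewrite ?cardfs0 | by []].
set m := a + (2^k)%:R.
have -> : run L (take i.+1 (seg a k.+1)) =
   run (ins m L) (take i (seg a k ++ seg m k ++ [:: (m,false)])) by [].
have [Hm1 Hm2] := andP (mid_bounds a k).
rewrite take_cat size_seg; case: ltnP => Hi1.
  have [S [E HS C Hm]] := IH a (ins m L) i (preL H) (ltnW Hi1).
  exists (ins m S); split.
  - rewrite E; apply/fsetP => x; rewrite !inE.
    by case: (x == m); case: (x \in L); case: (x \in S).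
  - move=> x; rewrite /ins !inE => /orP [/eqP ->|/HS /andP [h1 h2]]; first by rewrite Hm1 Hm2.
    by rewrite h1 (lt_trans h2 Hm2).
  - by rewrite /ins cardfsU1; case: (m \notin S) => /=; rewrite ?add1n ?add0n ?ltnS // (leq_trans C).
  - by move=> _; rewrite /ins !inE eqxx.
rewrite run_cat seg_final; last exact: preL H.
rewrite take_cat size_seg; case: ltnP => Hi2.
  have [S [E HS C Hm]] := IH m (ins m L) (i - sz k)%N (preR H) (ltnW Hi2).
  exists (ins m S); split.
  - rewrite E; apply/fsetP => x; rewrite !inE.
    by case: (x == m); case: (x \in L); case: (x \in S).
  - move=> x; rewrite /ins !inE => /orP [/eqP ->|/HS /andP [h1 h2]]; first by rewrite Hm1 Hm2.
    by rewrite (lt_trans Hm1 h1) pow2S addrA.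
  - by rewrite /ins cardfsU1; case: (m \notin S) => /=; rewrite ?add1n ?add0n ?ltnS // (leq_trans C).
  - by move=> _; rewrite /ins !inE eqxx.
rewrite run_cat seg_final; last exact: preR H.
case En: (i - sz k - sz k)%N => [|n].
  exists [fset m]%fset; split.
  - by rewrite /= /ins fsetUC.
  - by move=> x; rewrite inE => /eqP ->; rewrite Hm1 Hm2.
  - by rewrite cardfs1.
  - by move=> _; rewrite /ins !inE eqxx.
exists fset0; split.
- rewrite fsetU0 /= /stepf /ins /=; apply/fsetP => x; rewrite !inE; case: eqVneq => [->|] //=.
  by rewrite (negbTE (mid_notin H)).
- by move=> x; rewrite inE.
- by rewrite cardfs0.
- move: Hi En => /=; lia.
Qed.

Lemma seg_full k : forall a L, Pre L a k ->
  exists i, (i <= sz k)%N /\ exists S : {fset R}, [/\ run L (take i (seg a k)) = fsetU L S,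
    (forall x, x \in S -> (a < x) && (x < a + (2^k)%:R)) & (#|` S| = k)%N].
Proof.
elim: k => [|k IH] a L H.
  exists 0%N; split => //; exists fset0.
  split; [by rewrite fsetU0 | by move=> x; rewrite inE | by rewrite ?cardfs0].
set m := a + (2^k)%:R.
have [Hm1 Hm2] := andP (mid_bounds a k).
have [i [Hi [S [E HS C]]]] := IH a (ins m L) (preL H).
exists i.+1; split; first by move: Hi => /=; lia.
exists (ins m S); split.
- have -> : run L (take i.+1 (seg a k.+1)) =
     run (ins m L) (take i (seg a k ++ seg m k ++ [:: (m,false)])) by [].
  rewrite takel_cat ?size_seg // E; apply/fsetP => x; rewrite !inE.
  by case: (x == m); case: (x \in L); case: (x \in S).
- move=> x; rewrite /ins !inE => /orP [/eqP ->|/HS /andP [h1 h2]]; first by rewrite Hm1 Hm2.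
  by rewrite h1 (lt_trans h2 Hm2).
- rewrite /ins cardfsU1 C; suff -> : m \notin S by [].
  by apply/negP => /HS; rewrite ltxx andbF.
Qed.

Definition NH (s : seq update) (a : R) (k o : nat) (L : {fset R}) :=
  [/\ Pre L a k, a \in L, a + (2^k)%:R \in L, (o + sz k <= size s)%N &
      forall i, (i <= sz k)%N -> alive s (o + i) = run L (take i (seg a k))].

Lemma NH_left s a k o L : NH s a k.+1 o L -> NH s a k o.+1 (ins (a + (2^k)%:R) L).
Proof.
move=> [H1 H2 H3 H4 H5]; split.
- exact: preL.
- by rewrite /ins !inE H2 orbT.
- by rewrite /ins !inE eqxx.
- by move: H4 => /=; lia.
- move=> i Hi; rewrite addSnnS H5 /=; last by lia.
  by rewrite takel_cat // size_seg.
Qed.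

Lemma NH_right s a k o L : NH s a k.+1 o L ->
  NH s (a + (2^k)%:R) k (o.+1 + sz k) (ins (a + (2^k)%:R) L).
Proof.
move=> [H1 H2 H3 H4 H5]; split.
- exact: preR.
- by rewrite /ins !inE eqxx.
- by rewrite /ins !inE -addrA -pow2S H3 orbT.
- by move: H4 => /=; lia.
- move=> i Hi; rewrite -addnA addSnnS H5 /=; last by lia.
  rewrite take_cat size_seg ltnNge leq_addr /= addKn run_cat seg_final; last exact: preL.
  by rewrite takel_cat // size_seg.
Qed.

Lemma NH_alive s a k o L : NH s a k o L -> forall i, (i <= sz k)%N ->
  [/\ a \in alive s (o + i), a + (2^k)%:R \in alive s (o + i) &
      (0 < i < sz k)%N -> a + (2^k.-1)%:R \in alive s (o + i)].
Proof.
move=> [H1 H2 H3 H4 H5] i Hi; rewrite H5 //.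
have [S [E _ _ Hm]] := seg_states H1 Hi.
by rewrite E !inE H2 H3 /=; split => // /Hm ->; rewrite orbT.
Qed.

Lemma mono_chain s dd (emb : monotone_hst_embedding s dd) u v t1 t2 :
  (t1 <= t2 <= size s)%N ->
  (forall t, (t1 <= t <= t2)%N -> u \in alive s t /\ v \in alive s t) ->
  dd t2 u v <= dd t1 u v.
Proof.
case: emb => _ [_ Hm].
elim: t2 => [|t2 IH] /andP [H12 H2s] Ha.
  by move: H12; rewrite leqn0 => /eqP ->.
case: (eqVneq t1 t2.+1) => [->//|Hne].
have H12' : (t1 <= t2)%N by move: H12 Hne; lia.
apply: le_trans (IH _ _).
- have [|Hu1 Hv1] := Ha t2.+1; first by rewrite H12 leqnn.
  have [|Hu0 Hv0] := Ha t2; first by rewrite H12' leqnSn.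
  by apply: Hm => //; rewrite H2s.
- by rewrite H12' ltnW.
- by move=> t /andP [h1 h2]; apply: Ha; rewrite h1 (leq_trans h2).
Qed.

Definition Tn (k o : nat) : nat := if k is 0 then o else (o + sz k).-1.

Lemma Tn_bounds k o : (o <= Tn k o <= o + sz k)%N.
Proof. case: k => [|k] /=; rewrite ?addn0 ?leqnn //; lia. Qed.

Fixpoint inleaf (k o : nat) (a : R) (tau : nat) (x : R) : Prop :=
  if k is k'.+1 then inleaf k' o.+1 a tau x \/ inleaf k' (o.+1 + sz k') (a + (2^k')%:R) tau x
  else tau = o /\ x = a.

Lemma pow20 : ((2^0)%:R : R) = 1.
Proof. by rewrite expn0. Qed.

Lemma leaf_alive s k : forall a o L, NH s a k o L -> forall tau x, inleaf k o a tau x ->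
  [/\ x \in alive s tau, x + 1 \in alive s tau & (tau <= size s)%N].
Proof.
elim: k => [|k IH] a o L HN tau x.
  move=> [-> ->]; have [A1 A2 _] := NH_alive HN (leqnn 0).
  case: HN => _ _ _ H4 _.
  by move: A1 A2; rewrite addn0 pow20 => -> ->; split => //; move: H4; rewrite addn0.
move=> [Hl|Hr]; first exact: IH _ _ _ (NH_left HN) _ _ Hl.
exact: IH _ _ _ (NH_right HN) _ _ Hr.
Qed.

Lemma node_exists s dd (emb : monotone_hst_embedding s dd) k :
  forall a o L, NH s a k o L -> forall S t, (Tn k o <= t <= size s)%N ->
  (forall t', (Tn k o <= t' <= t)%N -> a \in alive s t' /\ a + (2^k)%:R \in alive s t') ->
  S <= dd t a (a + (2^k)%:R) ->
  exists tau x, inleaf k o a tau x /\ S <= dd tau x (x + 1).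
Proof.
elim: k => [|k IH] a o L HN S t Ht Hal HS.
  exists o, a; split => //; rewrite -pow20.
  apply: le_trans HS (mono_chain emb Ht Hal).
have HN' := HN; case: HN' => _ _ _ H4 _.
set T := Tn k.+1 o.
have HTs : (T <= size s)%N by case/andP: Ht => /leq_trans; apply.
have HT := le_trans HS (mono_chain emb Ht Hal).
have [A1 A2 A3] := NH_alive HN (leqnSn (sz k + sz k).+1).
have ET : T = (o + (sz k + sz k).+1)%N by rewrite /T /= addnS.
rewrite -ET in A1 A2 A3.
have Am : a + (2^k)%:R \in alive s T by apply: A3; rewrite /= ltnSn.
have := hst_metric_ultra ((proj1 emb) T HTs) A1 Am A2.
move=> /(le_trans HT); rewrite le_max => /orP [HL|HR].
- have [tau [x [Hin Hd]]] : exists tau x, inleaf k o.+1 a tau x /\ S <= dd tau x (x + 1).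
    apply: (IH _ _ _ (NH_left HN) S T).
  + have := Tn_bounds k o.+1; rewrite ET; lia.
  + move=> t' Ht'.
    have Hb : (1 <= t' - o <= (sz k + sz k).+1)%N by have := Tn_bounds k o.+1; move: Ht'; lia.
    have Ei : t' = (o + (t' - o))%N by lia.
    have Hle : (t' - o <= sz k.+1)%N by move: Hb => /=; lia.
    have [B1 _ B3] := NH_alive HN Hle.
    by rewrite Ei; split => //; apply: B3; move: Hb => /=; lia.
  + exact: HL.
  + by exists tau, x; split => //; left.
- have [tau [x [Hin Hd]]] : exists tau x,
      inleaf k (o.+1 + sz k) (a + (2^k)%:R) tau x /\ S <= dd tau x (x + 1).
    apply: (IH _ _ _ (NH_right HN) S T).
  + have := Tn_bounds k (o.+1 + sz k); rewrite ET; lia.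
  + move=> t' Ht'.
    have Hb : (1 <= t' - o <= (sz k + sz k).+1)%N by have := Tn_bounds k (o.+1 + sz k); move: Ht'; lia.
    have Ei : t' = (o + (t' - o))%N by lia.
    have Hle : (t' - o <= sz k.+1)%N by move: Hb => /=; lia.
    have [_ B2 B3] := NH_alive HN Hle.
    rewrite -addrA -pow2S Ei; split => //; apply: B3; move: Hb => /=; lia.
  + by rewrite -addrA -pow2S.
  + by exists tau, x; split => //; right.
Qed.

Fixpoint tsum (g : nat -> R -> R) (k o : nat) (a : R) : R :=
  if k is k'.+1 then tsum g k' o.+1 a + tsum g k' (o.+1 + sz k') (a + (2^k')%:R)
  else g o a.

Lemma tsum_le g1 g2 k : forall o a, (forall tau x, inleaf k o a tau x -> g1 tau x <= g2 tau x) ->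
  tsum g1 k o a <= tsum g2 k o a.
Proof.
elim: k => [|k IH] o a H /=; first by apply: H.
by apply: lerD; apply: IH => tau x Hi; apply: H; [left|right].
Qed.

Lemma tsum_bonus g1 g2 k : forall o a, (forall tau x, inleaf k o a tau x -> g1 tau x <= g2 tau x) ->
  forall tau0 x0, inleaf k o a tau0 x0 ->
  tsum g1 k o a + (g2 tau0 x0 - g1 tau0 x0) <= tsum g2 k o a.
Proof.
elim: k => [|k IH] o a H tau0 x0 /=.
  by move=> [-> ->]; rewrite addrC subrK.
move=> [Hl|Hr].
- rewrite addrAC; apply: lerD; first by apply: IH => // tau x Hi; apply: H; left.
  by apply: tsum_le => tau x Hi; apply: H; right.
- rewrite -addrA; apply: lerD; first by apply: tsum_le => tau x Hi; apply: H; left.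
  by apply: IH => // tau x Hi; apply: H; right.
Qed.

Lemma tsum_ge0 g k : forall o a, (forall tau x, inleaf k o a tau x -> 0 <= g tau x) ->
  0 <= tsum g k o a.
Proof.
elim: k => [|k IH] o a H /=; first by apply: H.
by apply: addr_ge0; apply: IH => tau x Hi; apply: H; [left|right].
Qed.

Lemma leaf_ge0 s dd (emb : monotone_hst_embedding s dd) k a o L : NH s a k o L ->
  forall tau x, inleaf k o a tau x -> 1 <= dd tau x (x + 1).
Proof.
move=> HN tau x Hi; have [A1 A2 A3] := leaf_alive HN Hi.
apply: le_trans ((proj1 (proj2 emb)) tau x (x + 1) A3 A1 A2).
by rewrite opprD addrA subrr sub0r normrN normr1.
Qed.

Lemma tsum_lower s dd (emb : monotone_hst_embedding s dd) k : forall a o L, NH s a k o L ->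
  k%:R * (2^k)%:R <= 2 * tsum (fun tau x => Num.min (dd tau x (x + 1)) (2^k)%:R) k o a.
Proof.
elim: k => [|k IH] a o L HN.
  rewrite mul0r /= pow20 mulr_ge0 // le_min ler01 andbT.
  by apply: le_trans ler01 (leaf_ge0 emb HN _).
have HN' := HN; case: HN' => _ H2 H3 H4 _.
have HT := Tn_bounds k.+1 o.
have [tau0 [x0 [Hin Hd]]] : exists tau x, inleaf k.+1 o a tau x /\ (2^k.+1)%:R <= dd tau x (x + 1).
  apply: (node_exists emb HN (t := Tn k.+1 o)).
  - by rewrite leqnn /=; case/andP: HT => _ h; exact: leq_trans h H4.
  - move=> t' Ht'; have -> : t' = Tn k.+1 o by move: Ht'; lia.
    have E : Tn k.+1 o = (o + (sz k + sz k).+1)%N by rewrite /= addnS.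
    have [A1 A2 _] := NH_alive HN (leqnSn (sz k + sz k).+1).
    by rewrite E.
  - have E : Tn k.+1 o = (o + (sz k + sz k).+1)%N by rewrite /= addnS.
    have [A1 A2 _] := NH_alive HN (leqnSn (sz k + sz k).+1).
    rewrite E; apply: le_trans ((proj1 (proj2 emb)) _ a _ _ A1 A2); last by move: H4 => /=; lia.
    by rewrite opprD addrA subrr sub0r normrN ger0_norm // ltW // pow2_gt0.
set G1 := fun tau x => Num.min (dd tau x (x + 1)) (2^k)%:R.
set G2 := fun tau x => Num.min (dd tau x (x + 1)) (2^k.+1)%:R.
have H12 : forall tau x, inleaf k.+1 o a tau x -> G1 tau x <= G2 tau x.
  move=> tau x _; rewrite /G1 /G2; apply: le_min2 => //.
  by rewrite pow2S lerDl ltW ?pow2_gt0.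
have B := tsum_bonus H12 Hin.
have Hb : (2^k)%:R <= G2 tau0 x0 - G1 tau0 x0.
  have -> : G2 tau0 x0 = (2^k.+1)%:R by rewrite /G2 min_r.
  have : G1 tau0 x0 <= (2^k)%:R by rewrite /G1 ge_min lexx orbT.
  rewrite pow2S; lra.
have IH1 := IH _ _ _ (NH_left HN).
have IH2 := IH _ _ _ (NH_right HN).
have E1 : tsum G1 k.+1 o a = tsum G1 k o.+1 a + tsum G1 k (o.+1 + sz k) (a + (2^k)%:R) by [].
rewrite E1 in B.
move: B Hb IH1 IH2; rewrite -/G1.
set X := tsum G1 _ _ _; set Y := tsum G1 _ _ _; set Z := tsum G2 _ _ _; set D := G2 _ _ - _.
rewrite pow2S -addn1 natrD.
set P := ((2^k)%:R : R); set K := (k%:R : R).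
nra.
Qed.

Section Prob.
Variables (dsp : measure_display) (Omega : measurableType dsp) (P : probability Omega R)
  (d : Omega -> nat -> R -> R -> R) (s : seq update) (lambda : R).
Hypothesis HP : prob_monotone_hst_embedding s P d.
Hypothesis HD : distortion_at_most s P d lambda.

Definition Fw k o a := fun w => tsum (fun tau x => d w tau x (x + 1)) k o a.

Lemma tsum_int k : forall a o L, NH s a k o L ->
  [/\ @measurable_fun _ _ Omega (measurableTypeR R) setT (Fw k o a), (forall w, 0 <= Fw k o a w) &
      (\int[P]_w (Fw k o a w)%:E <= (lambda * (2^k)%:R)%:E)%E].
Proof.
elim: k => [|k IH] a o L HN.
  have Hl : inleaf 0 o a o a by [].
  have [A1 A2 A3] := leaf_alive HN Hl.
  split.
  - exact: (proj2 HP).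
  - by move=> w; apply: le_trans ler01 (leaf_ge0 ((proj1 HP) w) HN Hl).
  - apply: le_trans ((proj2 HD) o a (a + 1) A3 A1 A2) _.
    by rewrite pow20 opprD addrA subrr sub0r normrN normr1.
have [M1 N1 I1] := IH _ _ _ (NH_left HN).
have [M2 N2 I2] := IH _ _ _ (NH_right HN).
have EF : Fw k.+1 o a = Fw k o.+1 a \+ Fw k (o.+1 + sz k) (a + (2^k)%:R) by [].
rewrite EF; split.
- exact: measurable_realfun.measurable_funD.
- by move=> w; apply: addr_ge0.
- under eq_integral do rewrite EFinD.
  have h1 : forall w, setT w -> (0 <= (Fw k o.+1 a w)%:E)%E by move=> w _; rewrite lee_fin.
  have h2 : forall w, setT w -> (0 <= (Fw k (o.+1 + sz k) (a + (2^k)%:R) w)%:E)%E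
    by move=> w _; rewrite lee_fin.
  rewrite (ge0_integralD P measurableT h1 _ h2); last 2 first.
  + exact/measurable_realfun.measurable_EFinP.
  + exact/measurable_realfun.measurable_EFinP.
  apply: le_trans (leeD I1 I2) _.
  by rewrite -EFinD pow2S mulrDr.
Qed.

Lemma root_bound M a o L : NH s a M o L -> M%:R / 2 <= lambda.
Proof.
move=> HN.
have [Mm Nn I] := tsum_int HN.
set c0 : R := (M%:R * (2^M)%:R / 2)%R.
have Hpt : forall w, c0 <= Fw M o a w.
  move=> w; have := tsum_lower ((proj1 HP) w) HN.
  have : tsum (fun tau x => Num.min (d w tau x (x+1)) (2^M)%:R) M o a <= Fw M o a w.
    by apply: tsum_le => tau x _; rewrite ge_min lexx.
  rewrite /c0; lra.
have c0ge : 0 <= c0 by rewrite /c0 divr_ge0 // mulr_ge0 // ltW // pow2_gt0.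
have Hc : (\int[P]_w (c0%:E) = c0%:E)%E.
  rewrite integral_cst //; transitivity (c0%:E * 1)%E; last by rewrite mule1.
  by congr (_ * _)%E; exact: probability_setT.
have : (c0%:E <= (lambda * (2^M)%:R)%:E)%E.
  rewrite -Hc; apply: le_trans _ I; apply: ge0_le_integral => //.
  - exact/measurable_realfun.measurable_EFinP.
  - by move=> w _; rewrite lee_fin.
rewrite lee_fin /c0 => H; have P0 := pow2_gt0 M.
rewrite -(ler_pM2r P0); lra.
Qed.
End Prob.

Definition L0 (M : nat) : {fset R} := ins (0 + (2^M)%:R) (ins 0 fset0).
Definition theseq (M : nat) : seq update := [:: (0, true); (0 + (2^M)%:R, true)] ++ seg 0 M.

Lemma size_theseq M : size (theseq M) = (sz M).+2.
Proof. by rewrite /theseq /= size_seg. Qed.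

Lemma B_pos M : (0 : R) < 0 + (2^M)%:R.
Proof. by rewrite add0r pow2_gt0. Qed.

Lemma root_NH M : NH (theseq M) 0 M 2 (L0 M).
Proof.
split.
- move=> x; rewrite /L0 /ins !inE => /orP [/eqP ->|/orP [/eqP ->|//]].
  + by rewrite ltxx andbF.
  + by rewrite ltxx.
- by rewrite /L0 /ins !inE eqxx orbT.
- by rewrite /L0 /ins !inE eqxx.
- by rewrite size_theseq add2n.
- by move=> i _; rewrite add2n.
Qed.

Lemma card_L0S M (S : {fset R}) : (forall x, x \in S -> (0 < x) && (x < 0 + (2^M)%:R)) ->
  #|` fsetU (L0 M) S| = (#|` S|).+2.
Proof.
move=> HS.
have -> : fsetU (L0 M) S = ins (0 + (2^M)%:R) (ins 0 S).
  by apply/fsetP => x; rewrite /L0 /ins !inE; case: (x == _); case: (x == 0).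
have n0 : (0 : R) \notin S by apply/negP => /HS; rewrite ltxx.
have nB : 0 + (2^M)%:R \notin ins 0 S.
  rewrite /ins !inE negb_or; apply/andP; split.
  - by rewrite gt_eqF // B_pos.
  - by apply/negP => /HS; rewrite ltxx andbF.
by rewrite /ins cardfsU1 nB cardfsU1 n0.
Qed.

Lemma width_theseq M : width (theseq M) = M.+2.
Proof.
have HN := root_NH M; case: (HN) => H1 _ _ _ H5.
apply/eqP; rewrite eqn_leq; apply/andP; split.
- apply/bigmax_leqP => t _.
  case: t => [[|[|i]] Ht] /=.
  + by [].
  + by rewrite /alive /= fsetU0 cardfs1.
  + have Hi : (i <= sz M)%N by move: Ht; rewrite size_theseq; lia.
    have := H5 i Hi; rewrite add2n => ->.
    have [S [E HS C _]] := seg_states H1 Hi.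
    by rewrite E card_L0S.
- have [i [Hi [S [E HS C]]]] := seg_full H1.
  have Ht : (i.+2 < (size (theseq M)).+1)%N by rewrite size_theseq; lia.
  apply: leq_trans (leq_bigmax (Ordinal Ht)) => /=.
  by rewrite -add2n H5 // E card_L0S // C.
Qed.

Theorem mainTheorem5 :
  exists c : R, 0 < c /\
  forall l : nat, exists s : seq update,
    width s = l /\
    forall (dsp : measure_display) (Omega : measurableType dsp)
           (P : probability Omega R) (d : Omega -> nat -> R -> R -> R),
      prob_monotone_hst_embedding s P d ->
      forall lambda : R, distortion_at_most s P d lambda ->
        c * l%:R <= lambda.
Proof.
exists (1/6); split; first by lra.
case=> [|[|M]].
- exists [::]; split; first by rewrite /width big_ord1 /alive /= ?cardfs0.
  move=> dsp Omega P d _ lambda [H1 _]; rewrite mulr0; lra.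
- exists [:: (0, true)]; split.
    apply/eqP; rewrite eqn_leq; apply/andP; split.
    + apply/bigmax_leqP => t _; case: t => [[|[|i]] Ht] //=.
      by rewrite /alive /= fsetU0 cardfs1.
    + have Ht : (1 < 2)%N by [].
      apply: leq_trans (leq_bigmax (Ordinal Ht)) => /=.
      by rewrite /alive /= fsetU0 cardfs1.
  move=> dsp Omega P d _ lambda [H1 _]; lra.
- exists (theseq M); split; first exact: width_theseq.
  move=> dsp Omega P d HP lambda HD.
  have Hb := root_bound HP HD (root_NH M).
  have [H1 _] := HD.
  have HM := ler0n R M.
  rewrite -[M.+2]addn2 natrD; lra.
Qed.
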